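(* Let $\varphi$ be any irrevocable (non-wasteful) distribution policy and suppose the characteristic function satisfies $v\in V_1$. Then the competitive ratio of $\varphi$ with respect to greedy players is $\alpha=1$; that is, for every $v\in V_1$ and every arrival order $\pi$, the coalition structure formed by greedy players maximizes social welfare.
   Context: Players: a finite set $N=\{a_1,\dots,a_n\}$. A characteristic function is $v:2^N\to\mathbb{R}_{\ge 0}$ with $v(\emptyset)=0$. There are fixed, known constants $0<\mathsf{min}\le\mathsf{max}$ and every $v$ considered is monotone and bounded: $\mathsf{min}\le v(S)\le v(T)\le\mathsf{max}$ for all nonempty $S\subseteq T\subseteq N$. For an integer $\delta\ge1$, $V_\delta$ denotes the set of such $v$ for which additionally $\delta\cdot\mathsf{min}\le\mathsf{max}<(\delta+1)\cdot\mathsf{min}$. A coalition structure is a partition $C$ of $N$; its social welfare is $\mathsf{SW}(C\mid v)=\sum_{S\in C}v(S)$. Online process: an arrival order is a permutation $\pi=(\pi_1,\dots,\pi_n)$ of $N$; player $\pi_t$ arrives at time $t$. For $S\subseteq N$, $\pi_{|S}$ denotes the players of $S$ in the relative order of $\pi$; $\pi_{|S}$ is a prefix of $\pi_{|T}$ if $S\subseteq T$ and the players of $S$ are the first $|S|$ players of $\pi_{|T}$. Let $C^{t-1}$ be the coalition structure of the players arrived before time $t$ ($C^0=\emptyset$). At time $t$, player $\pi_t$ either joins an existing coalition $S\in C^{t-1}$ or forms the new coalition $\{\pi_t\}$ (choice $S=\emptyset$); decisions are never revised. A distribution policy $\varphi$ assigns to every $S\subseteq N$ and order $\pi_{|S}$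 a vector $(\varphi_i(S,\pi_{|S}\mid v))_{i\in S}$, and is non-wasteful: $\sum_{i\in S}\varphi_i(S,\pi_{|S})=v(S)$. It is irrevocable if for every $\pi$, every $S\subseteq T\subseteq N$ with $\pi_{|S}$ a prefix of $\pi_{|T}$, and every $i\in S$, $\varphi_i(S,\pi_{|S})\le\varphi_i(T,\pi_{|T})$ (value given to a player is never reduced when later players join). Greedy players: player $\pi_t$ chooses $S^*\in\arg\max_{S\in C^{t-1}\cup\{\emptyset\}}\varphi_{\pi_t}(S\cup\{\pi_t\},\pi_{|S\cup\{\pi_t\}})$ (ties broken by a predetermined rule). $C_g(v,\pi\mid\varphi)$ denotes the final coalition structure so formed. The competitive ratio of $\varphi$ over a class of characteristic functions is $\alpha=\inf_{v,\pi}\mathsf{SW}(C_g(v,\pi\mid\varphi))/\max_C\mathsf{SW}(C\mid v)$, the infimum over $v$ in the class and all arrival orders $\pi$. *)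

(* Defs.v *)
From HB Require Import structures.
From mathcomp Require Import all_boot all_order all_algebra.
Set Implicit Arguments. Unset Strict Implicit. Unset Printing Implicit Defensive.
Import Order.TTheory GRing.Theory Num.Theory.
Local Open Scope ring_scope.

Section Coalition.
Variables (R : realFieldType) (T : finType).

Definition arrival_order (pi : seq T) : Prop := perm_eq pi (enum T).

Definition restr (pi : seq T) (S : {set T}) : seq T := [seq x <- pi | x \in S].

Definition char_fun_bounded (v : {set T} -> R) (mn mx : R) : Prop :=
  [/\ v set0 = 0, (forall S, 0 <= v S), 0 < mn, mn <= mx &
      forall S S' : {set T}, S != set0 -> S \subset S' -> [/\ mn <= v S, v S <= v S' & v S' <= mx]].

Definition in_V (delta : nat) (v : {set T} -> R) (mn mx : R) : Prop :=
  [/\ (1 <= delta)%N, char_fun_bounded v mn mx,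
      delta%:R * mn <= mx & mx < (delta.+1)%:R * mn].

(* A distribution policy: phi S o i = phi_i(S, o) where o = pi_{|S}. *)
Definition non_wasteful (v : {set T} -> R) (phi : {set T} -> seq T -> T -> R) : Prop :=
  forall pi, arrival_order pi -> forall S : {set T},
    \sum_(i in S) phi S (restr pi S) i = v S.

Definition irrevocable (phi : {set T} -> seq T -> T -> R) : Prop :=
  forall pi, arrival_order pi -> forall S S' : {set T}, S \subset S' ->
    prefix (restr pi S) (restr pi S') ->
    forall i, i \in S -> phi S (restr pi S) i <= phi S' (restr pi S') i.

Definition join_payoff (phi : {set T} -> seq T -> T -> R) (pi : seq T)
    (S : {set T}) (x : T) : R :=
  phi (x |: S) (restr pi (x |: S)) x.

(* One greedy step: x chooses a maximiser S among C and the empty set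
   (any maximiser: this covers every predetermined tie-breaking rule). *)
Definition greedy_step (phi : {set T} -> seq T -> T -> R) (pi : seq T)
    (C : {set {set T}}) (x : T) (C' : {set {set T}}) : Prop :=
  exists S : {set T}, [/\ S \in C \/ S = set0,
    (forall S0 : {set T}, S0 \in C \/ S0 = set0 ->
        join_payoff phi pi S0 x <= join_payoff phi pi S x) &
    C' = (x |: S) |: (C :\ S)].

(* greedy_run phi pi p C : C is a coalition structure obtainable by greedy
   players arriving in the order p (a prefix of the arrival order pi). *)
Inductive greedy_run (phi : {set T} -> seq T -> T -> R) (pi : seq T) :
    seq T -> {set {set T}} -> Prop :=
| greedy_nil : greedy_run phi pi [::] set0
| greedy_rcons p C x C' : greedy_run phi pi p C -> greedy_step phi pi C x C' ->
    greedy_run phi pi (rcons p x) C'.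

Definition SW (v : {set T} -> R) (C : {set {set T}}) : R := \sum_(S in C) v S.

End Coalition.

(* Main.v *)
Require Import Defs.
From HB Require Import structures.
From mathcomp Require Import all_boot all_order all_algebra.
From mathcomp Require Import lra.
Import Order.TTheory GRing.Theory Num.Theory.
Local Open Scope ring_scope.

Lemma restr_lem (T : finType) (pi p q : seq T) (x : T) (S : {set T}) :
  uniq pi -> pi = p ++ x :: q -> S \subset [set z | z \in p] ->
  restr pi S = restr p S /\ restr pi (x |: S) = rcons (restr p S) x.
Proof.
move=> Hu Hpi HS; subst pi.
move: Hu; rewrite cat_uniq => /and3P [Hup Hhas Huq].
have xp : x \notin p by apply/negP => xp; have := hasPn Hhas x (mem_head _ _); rewrite /= xp.
have xS : x \notin S by apply/negP => /(subsetP HS); rewrite inE (negbTE xp).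
have qS : forall z, z \in q -> z \notin S.
  move=> z zq; apply/negP => /(subsetP HS); rewrite inE => zp.
  by have := hasPn Hhas z; rewrite inE zq orbT /= zp => /(_ isT).
have xq : x \notin q by move: Huq => /= /andP [].
rewrite /restr !filter_cat /= !inE eqxx (negbTE xS) /=.
have -> : [seq z <- q | z \in S] = [::].
  rewrite -(filter_pred0 q); apply: eq_in_filter => z zq; exact: negbTE (qS z zq).
have -> : [seq z <- q | z \in x |: S] = [::].
  rewrite -(filter_pred0 q); apply: eq_in_filter => z zq.
  rewrite !inE (negbTE (qS z zq)) orbF; apply/negP => /eqP zx; subst z; by rewrite zq in xq.
have -> : [seq z <- p | z \in x |: S] = [seq z <- p | z \in S].
  apply: eq_in_filter => z zp; rewrite !inE; case: eqP => // zx; subst z; by rewrite zp in xp.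
by rewrite cats0 cats1.
Qed.

Lemma payoff_bound (R : realFieldType) (T : finType) (v : {set T} -> R) (mn mx : R)
    (phi : {set T} -> seq T -> T -> R) pi p x q (S : {set T}) :
  in_V 1 v mn mx -> non_wasteful v phi -> irrevocable phi -> arrival_order pi ->
  pi = p ++ x :: q -> S != set0 -> S \subset [set z | z \in p] ->
  join_payoff phi pi S x < join_payoff phi pi set0 x.
Proof.
move=> [_ [v0 vge0 mn0 mnmx Hb] H1 H2] Hnw Hirr Hpi Hpq SN0 HS.
have Hu : uniq pi by rewrite (perm_uniq Hpi) enum_uniq.
have [r1 r2] := @restr_lem _ _ _ _ _ _ Hu Hpq HS.
have xp : x \notin S.
  apply/negP => /(subsetP HS); rewrite inE => xp.
  move: Hu; rewrite Hpq cat_uniq => /and3P [_ H _].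
  by have := hasPn H x (mem_head _ _); rewrite /= xp.
rewrite /join_payoff setU0.
have e1 : phi [set x] (restr pi [set x]) x = v [set x].
  by rewrite -(Hnw pi Hpi [set x]) big_set1.
have e2 := Hnw pi Hpi (x |: S).
rewrite big_setU1 //= in e2.
have e3 : v S <= \sum_(i in S) phi (x |: S) (restr pi (x |: S)) i.
  rewrite -(Hnw pi Hpi S); apply: ler_sum => i iS; apply: Hirr => //.
    exact: subsetU1.
  by rewrite r1 r2 -cats1 prefix_prefix.
have [h1 _ _] := Hb S S SN0 (subxx _).
have [_ _ h2] := Hb S (x |: S) SN0 (subsetU1 _ _).
have s10 : [set x] != set0 by apply/set0Pn; exists x; rewrite inE.
have [h3 _ _] := Hb [set x] [set x] s10 (subxx _).
rewrite e1; move: H2; rewrite /= => H2.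
have : phi (x |: S) (restr pi (x |: S)) x = v (x |: S) - \sum_(i in S) phi (x |: S) (restr pi (x |: S)) i.
  by rewrite -e2 addrK.
move=> ->.
lra.
Qed.

Lemma run_inv (R : realFieldType) (T : finType) (v : {set T} -> R) (mn mx : R)
    (phi : {set T} -> seq T -> T -> R) pi :
  in_V 1 v mn mx -> non_wasteful v phi -> irrevocable phi -> arrival_order pi ->
  forall p C, greedy_run phi pi p C -> forall q, pi = p ++ q ->
  C = [set [set y] | y in [set z | z \in p]].
Proof.
move=> HV Hnw Hirr Hpi p C; elim => [|p0 C0 x C' Hrun IH [S [HSin Hmax ->]]] q Hq.
  by apply/setP => B; rewrite !inE; apply/esym/imsetP => [[y]]; rewrite inE.
have Hq' : pi = p0 ++ x :: q by rewrite Hq cat_rcons.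
have EC := IH _ Hq'.
have HS0 : S = set0.
  case: HSin => // SC; exfalso.
  move: (SC); rewrite EC => /imsetP [y yp SE].
  have SN0 : S != set0 by apply/set0Pn; exists y; rewrite SE inE.
  have Ssub : S \subset [set z | z \in p0] by rewrite SE sub1set.
  have := @payoff_bound _ _ _ _ _ _ _ _ _ _ _ HV Hnw Hirr Hpi Hq' SN0 Ssub.
  have := Hmax set0 (or_intror erefl).
  by move=> h1 h2; have := le_lt_trans h1 h2; rewrite ltxx.
subst S.
have -> : C0 :\ set0 = C0.
  apply/setP => B; rewrite !inE; case: eqP => // ->; rewrite EC.
  apply/esym/negP => /imsetP [y _ E].
  by have := set11 y; rewrite -E inE.
have -> : [set z | z \in rcons p0 x] = x |: [set z | z \in p0].
  by apply/setP => z; rewrite !inE mem_rcons in_cons.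
by rewrite setU0 EC imsetU1.
Qed.

Theorem theorem1 (R : realFieldType) (T : finType) (v : {set T} -> R) (mn mx : R)
    (phi : {set T} -> seq T -> T -> R) :
  in_V 1 v mn mx -> non_wasteful v phi -> irrevocable phi ->
  forall (pi : seq T) (C : {set {set T}}),
    arrival_order pi -> greedy_run phi pi pi C ->
    forall P : {set {set T}}, partition P [set: T] -> SW v P <= SW v C.
Proof.
move=> HV Hnw Hirr pi C Hpi Hrun P HP.
have EC := @run_inv _ _ _ _ _ _ _ HV Hnw Hirr Hpi _ _ Hrun [::] (esym (cats0 pi)).
have Hall : [set z | z \in pi] = [set: T].
  by apply/setP => z; rewrite !inE (perm_mem Hpi) mem_enum.
rewrite EC Hall /SW big_imset /=; last by move=> a b _ _; apply: set1_inj.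
move: HP => /and3P [/eqP Hcov Htriv H0].
rewrite -Hcov (big_trivIset _ Htriv) /=.
apply: ler_sum => B BP.
have BN0 : B != set0 by apply/negP => /eqP BE; rewrite -BE BP in H0.
move: HV => [_ [v0 vge0 mn0 mnmx Hb] H1 H2].
have [b Bb] := set0Pn _ BN0.
case: (boolP (B == [set b])) => [/eqP -> | Bnb].
  by rewrite big_set1.
have [c /andP [cB cb]] : exists c, (c \in B) && (c != b).
  apply/existsP; apply: contraR Bnb; rewrite negb_exists => /forallP H.
  rewrite eqEsubset sub1set Bb andbT; apply/subsetP => z zB.
  by move: (H z); rewrite zB /= negbK inE.
have [_ _ hB] := Hb B B BN0 (subxx _).
have s1 : forall y : T, [set y] != set0 by move=> y; apply/set0Pn; exists y; rewrite inE.
have [hb _ _] := Hb _ _ (s1 b) (subxx _).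
have [hc _ _] := Hb _ _ (s1 c) (subxx _).
rewrite (bigD1 b) //= (bigD1 c) /=; last by rewrite cB cb.
have : 0 <= \sum_(i | (i \in B) && (i != b) && (i != c)) v [set i] by apply: sumr_ge0.
move=> h0; rewrite /= in H2; lra.
Qed.
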